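(* Let $C=(C_1,\dots,C_m)$ be a quantum circuit with canonical form $G$, whose vertices are $G_1,\dots,G_m$ with $G_k$ corresponding to gate $C_k$. For any indices $1\le i<j\le m$, the following are equivalent: (1) $[i,j]_C=0$; (2) $G_j$ is not a successor of $G_i$ in $G$, i.e., there is no directed path from $G_i$ to $G_j$ in $G$.
   Context: A gate is a unitary operation acting on a specified ordered list of qubits; we identify it with the unitary it induces on the full $n$-qubit space. Two gates $A,B$ commute if their unitaries satisfy $[A,B]=AB-BA=0$. A circuit is a finite sequence of gates $(C_1,\dots,C_m)$ (applied left to right). A pairwise commutation move replaces two adjacent gates whose unitaries commute by the same two gates in swapped order. For indices $i,j$, we write $[i,j]_C=0$ if and only if $i=j$, or there is a finite sequence of pairwise commutation moves applied to $C$ after which the gate originally at position $j$ comes before the gate originally at position $i$ (for $i<j$; symmetrically for $j<i$). The canonical form of $C$ is the directed graph built as follows: start with the empty graph; for $t=1,\dots,m$: mark every vertex already in the graph as ''reachable''; add vertex $G_t$; then for $s=t-1,t-2,\dots,1$ in this order, if $G_s$ is marked reachable and $[C_s,C_t]\neq 0$, add a directed edge $G_s\to G_t$ and mark every predecessor of $G_s$ (every vertex from which there is a directed path to $G_s$ in the current graph) as not reachable. *)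

(* Defs.v *)
From HB Require Import structures.
From mathcomp Require Import all_boot all_order all_algebra all_field.
Set Implicit Arguments. Unset Strict Implicit. Unset Printing Implicit Defensive.
Import GRing.Theory Num.Theory.
Local Open Scope ring_scope.

(* An n-qubit gate is identified with its unitary on the full 2^n-dim space. *)
Definition gate_mx (n : nat) := 'M[algC]_(2 ^ n).

Definition unitary_mx n (A : gate_mx n) : Prop :=
  A *m (map_mx Num.conj A)^T = 1%:M.

(* A circuit (C_1,...,C_m) is a sequence; positions are 0-based: C_k = nth. *)
Definition gate_at n (C : seq (gate_mx n)) (k : nat) : gate_mx n := nth 0 C k.

Definition commute_mx n (A B : gate_mx n) : Prop := A *m B - B *m A = 0.
Definition commuteb n (A B : gate_mx n) : bool := A *m B - B *m A == 0.

(* The state is the current order of gates, recorded by their ORIGINAL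
   positions; initially iota 0 m. *)
Definition comm_move n (C : seq (gate_mx n)) (s s' : seq nat) : Prop :=
  exists k, (k.+1 < size s)%N /\
    commute_mx (gate_at C (nth 0%N s k)) (gate_at C (nth 0%N s k.+1)) /\
    s' = take k s ++ [:: nth 0%N s k.+1; nth 0%N s k] ++ drop k.+2 s.

Inductive comm_moves n (C : seq (gate_mx n)) : seq nat -> seq nat -> Prop :=
| cm_refl s : comm_moves C s s
| cm_step s1 s2 s3 : comm_move C s1 s2 -> comm_moves C s2 s3 -> comm_moves C s1 s3.

(* [i,j]_C = 0  (for i < j: gate j can be moved before gate i) *)
Definition comm_zero n (C : seq (gate_mx n)) (i j : nat) : Prop :=
  i = j \/
  exists s, comm_moves C (iota 0 (size C)) s /\
    (if (i < j)%N then (index j s < index i s)%N else (index i s < index j s)%N).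

Definition edge_rel (E : seq (nat * nat)) : rel nat := fun u v => (u, v) \in E.

Fixpoint reach_within (E : seq (nat * nat)) (k : nat) (u v : nat) : bool :=
  match k with
  | 0 => false
  | k'.+1 => ((u, v) \in E) || has (fun e => (e.1 == u) && reach_within E k' e.2 v) E
  end.

(* u is a predecessor of v: there is a directed path (of positive length)
   from u to v; any such path can be shortened to one of length <= size E. *)
Definition is_pred (E : seq (nat * nat)) (u v : nat) : bool :=
  reach_within E (size E) u v.

Fixpoint canon_inner n (C : seq (gate_mx n)) (t k : nat) (reach : nat -> bool)
    (E : seq (nat * nat)) : seq (nat * nat) :=
  match k with
  | 0 => E
  | k'.+1 =>
      if reach k' && ~~ commuteb (gate_at C k') (gate_at C t) then
        let E' := (k', t) :: E in
        canon_inner C t k' (fun u => reach u && ~~ is_pred E' u k') E'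
      else canon_inner C t k' reach E
  end.

Fixpoint canon_build n (C : seq (gate_mx n)) (k : nat) : seq (nat * nat) :=
  match k with
  | 0 => [::]
  | t.+1 => canon_inner C t t (fun u => (u < t)%N) (canon_build C t)
  end.

(* edge list of the canonical form G of C; vertex k is G_{k+1} *)
Definition canonical_form n (C : seq (gate_mx n)) : seq (nat * nat) :=
  canon_build C (size C).

Definition has_dpath (E : seq (nat * nat)) (u v : nat) : Prop :=
  exists p : seq nat, p != [::] /\ path (edge_rel E) u p /\ last u p = v.

(* Main.v *)
Require Import Defs.
From HB Require Import structures.
From mathcomp Require Import all_boot all_order all_algebra all_field.
From mathcomp Require Import zify.
From Stdlib Require Import ClassicalEpsilon.
Set Implicit Arguments. Unset Strict Implicit. Unset Printing Implicit Defensive.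
Import GRing.Theory.

Definition dep n (C : seq (gate_mx n)) (a b : nat) : Prop :=
  (a < b)%N /\ ~~ commuteb (gate_at C a) (gate_at C b).

Inductive tc n (C : seq (gate_mx n)) : nat -> nat -> Prop :=
| tc1 a b : dep C a b -> tc C a b
| tc2 a b c : tc C a b -> tc C b c -> tc C a c.

Lemma dep_lt_size n (C : seq (gate_mx n)) a b : dep C a b -> (b < size C)%N.
Proof.
case=> _ H; rewrite ltnNge; apply/negP=> Hb; move: H.
by rewrite /commuteb /gate_at [nth 0%R C b]nth_default // mulmx0 mul0mx subrr eqxx.
Qed.

Lemma tc_lt n (C : seq (gate_mx n)) a b : tc C a b -> (a < b)%N /\ (b < size C)%N.
Proof.
elim=> [x y H| x y z _ [H1 _] _ [H2 H3]].
  by split; [case: H | exact: dep_lt_size H].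
by split=> //; apply: ltn_trans H1 H2.
Qed.

Lemma comm_moves_trans n (C : seq (gate_mx n)) s1 s2 s3 :
  comm_moves C s1 s2 -> comm_moves C s2 s3 -> comm_moves C s1 s3.
Proof. elim=> [s|a b c Hm _ IH] // H; exact: cm_step Hm (IH H). Qed.

Lemma comm_move_shape n (C : seq (gate_mx n)) s s' : comm_move C s s' ->
  exists p x y q, [/\ s = p ++ x :: y :: q, s' = p ++ y :: x :: q
                    & commute_mx (gate_at C x) (gate_at C y)].
Proof.
case=> k [Hk [Hc ->]].
exists (take k s), (nth 0%N s k), (nth 0%N s k.+1), (drop k.+2 s); split=> //.
rewrite -[LHS](cat_take_drop k s); congr (_ ++ _).
rewrite (drop_nth 0%N) ?(drop_nth 0%N (n:=k.+1)) //; exact: ltnW.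
Qed.

Lemma comm_move_step n (C : seq (gate_mx n)) p x y q :
  commute_mx (gate_at C x) (gate_at C y) ->
  comm_move C (p ++ x :: y :: q) (p ++ y :: x :: q).
Proof.
move=> H; exists (size p); rewrite size_cat /= !nth_cat ltnn subnn /=.
have -> : ((size p).+1 < size p) = false by lia.
have -> : (size p).+1 - size p = 1 by lia.
split; first lia.
split=> //; rewrite take_size_cat //.
rewrite -addn2 drop_cat.
have -> : (size p + 2 < size p) = false by lia.
have -> : size p + 2 - size p = 2 by lia.
by rewrite /= drop0.
Qed.

Definition ordered n (C : seq (gate_mx n)) (s : seq nat) :=
  forall a b, tc C a b -> (index a s < index b s)%N.

Lemma index_swap (p q : seq nat) x y z : x \notin p -> y \notin p -> x != y ->
  index z (p ++ y :: x :: q) =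
  if z == x then (size p).+1 else if z == y then size p else index z (p ++ x :: y :: q).
Proof.
move=> xp yp xy; rewrite !index_cat.
have [->|zx] := eqVneq z x; first by rewrite (negPf xp) /= eq_sym (negPf xy) eqxx addn1.
have [->|zy] := eqVneq z y; first by rewrite (negPf yp) /= eqxx addn0.
case: (z \in p) => //=; by rewrite eq_sym (negPf zy) eq_sym (negPf zx).
Qed.

Lemma index_pos (p q : seq nat) x y z : x \notin p -> y \notin p ->
  ((z == x) = (index z (p ++ x :: y :: q) == size p)) /\
  (x != y -> (z == y) = (index z (p ++ x :: y :: q) == (size p).+1)).
Proof.
move=> xp yp; rewrite index_cat; case: ifP => zp.
  have H : (index z p < size p)%N by rewrite index_mem.
  have zx : (z == x) = false by apply/negP => /eqP E; rewrite -E zp in xp.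
  have zy : (z == y) = false by apply/negP => /eqP E; rewrite -E zp in yp.
  rewrite zx zy; split; [|move=> _]; symmetry; apply/negP => /eqP E; lia.
split; [|move=> xy] => /=.
  rewrite -{2}[size p]addn0 eqn_add2l /=; by rewrite [z == x]eq_sym; case: (x == z).
rewrite -[(size p).+1]addn1 eqn_add2l; have [->|zx] := eqVneq z x; first by rewrite /= (negPf xy).
rewrite /= [z == y]eq_sym; by case: (y == z).
Qed.

Lemma ordered_step n (C : seq (gate_mx n)) p x y q :
  uniq (p ++ x :: y :: q) -> commute_mx (gate_at C x) (gate_at C y) ->
  ordered C (p ++ x :: y :: q) -> ordered C (p ++ y :: x :: q).
Proof.
move=> U Hc Ho.
move: (U); rewrite cat_uniq /= !negb_or => /and3P[_ /and3P[xp yp _] /andP[]].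
move=> /andP[xy _] _.
have fx : index x (p ++ x :: y :: q) = size p.
  by apply/eqP; rewrite -(proj1 (index_pos q x xp yp)).
have fy : index y (p ++ x :: y :: q) = (size p).+1.
  by apply/eqP; rewrite -(proj2 (index_pos q y xp yp) xy).
move=> a b Hab; have Hf := Ho a b Hab.
have Ex : ~ (a == x /\ b == y).
  case=> /eqP ax /eqP bY; subst a b.
  inversion Hab; subst.
    case: H => _ /negP; apply; exact/eqP.
  have := Ho _ _ H; have := Ho _ _ H0; rewrite fx fy; lia.
have [Ea1 Ea2] := index_pos q a xp yp; have [Eb1 Eb2] := index_pos q b xp yp.
rewrite (index_swap q a xp yp xy) (index_swap q b xp yp xy) Ea1 (Ea2 xy) Eb1 (Eb2 xy).
move: Ex Hf; rewrite Ea1 (Eb2 xy).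
move: (index a (p ++ x :: y :: q)) (index b (p ++ x :: y :: q)) (size p) => fa fb P.
case: (fa =P P); case: (fa =P P.+1); case: (fb =P P);
  case: (fb =P P.+1) => /= *; lia.
Qed.

Lemma moves_inv n (C : seq (gate_mx n)) s s' : comm_moves C s s' ->
  uniq s -> ordered C s -> ordered C s'.
Proof.
elim=> // s1 s2 s3 /comm_move_shape [p [x [y [q [-> -> Hc]]]]] _ IH U O.
apply: IH; last exact: ordered_step.
have Hp : perm_eq (p ++ x :: y :: q) (p ++ y :: x :: q).
  by rewrite perm_cat2l; apply/permPl; exact: (perm_catCA [:: x] [:: y] q).
by rewrite -(perm_uniq Hp).
Qed.

Lemma index_iota0 m a : (a < m)%N -> index a (iota 0 m) = a.
Proof.
move=> am; have := index_uniq 0%N (s:=iota 0 m) (i:=a).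
by rewrite size_iota nth_iota // add0n iota_uniq => ->.
Qed.

Lemma comm_zero_tc n (C : seq (gate_mx n)) i j : (i < j)%N ->
  comm_zero C i j -> ~ tc C i j.
Proof.
move=> ij [E|[s [Hm H]]]; first by rewrite E ltnn in ij.
move=> T; move: H; rewrite ij.
have O : ordered C s.
  apply: moves_inv Hm (iota_uniq _ _) _ => a b Hab.
  have [ab bm] := tc_lt Hab.
  rewrite !index_iota0 //; exact: ltn_trans ab bm.
by have := O _ _ T; lia.
Qed.

Lemma move_left n (C : seq (gate_mx n)) p r y q :
  (forall x, x \in r -> commute_mx (gate_at C x) (gate_at C y)) ->
  comm_moves C (p ++ r ++ y :: q) (p ++ y :: r ++ q).
Proof.
elim: r p => [|x r IH] p H /=; first exact: cm_refl.
have := IH (rcons p x) (fun z zr => H z ltac:(by rewrite inE zr orbT)).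
rewrite -cats1 -!catA /= => Hm.
apply: comm_moves_trans Hm _.
apply: cm_step (cm_refl _ _); apply: comm_move_step; apply: H.
by rewrite inE eqxx.
Qed.

Lemma partition_moves n (C : seq (gate_mx n)) (U : pred nat) :
  (forall x y, ~~ U x -> U y -> (x < y)%N -> commute_mx (gate_at C x) (gate_at C y)) ->
  forall q p r, sorted ltn q -> all (predC U) r ->
  (forall x y, x \in r -> y \in q -> (x < y)%N) ->
  comm_moves C (p ++ r ++ q) (p ++ filter U q ++ r ++ filter (predC U) q).
Proof.
move=> HU; elim=> [|y q IH] p r Hs Hr Hrq /=.
  by rewrite cats0; exact: cm_refl.
have Hs' : sorted ltn q := path_sorted Hs.
have Hyq : forall z, z \in q -> (y < z)%N.
  by apply/allP; exact: (order_path_min ltn_trans Hs).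
case: ifP => Uy.
  apply: comm_moves_trans (move_left p (r:=r) (y:=y) q _) _.
    move=> x xr; apply: HU; [exact: (allP Hr) | done | apply: Hrq xr _].
    by rewrite inE eqxx.
  have := IH (rcons p y) r Hs' Hr (fun x z xr zq => Hrq x z xr ltac:(by rewrite inE zq orbT)).
  by rewrite -cats1 -!catA.
have := IH p (rcons r y) Hs' _ _.
rewrite -cats1 -!catA /=; apply.
  by rewrite all_cat Hr /= Uy.
move=> x z; rewrite mem_cat inE => /orP[xr|/eqP ->]; last exact: Hyq.
by move=> zq; apply: Hrq xr _; rewrite inE zq orbT.
Qed.

Lemma tc_comm_zero n (C : seq (gate_mx n)) i j : (i < j)%N -> (j < size C)%N ->
  ~ tc C i j -> comm_zero C i j.
Proof.
move=> ij jm T; right.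
pose U := fun z => if excluded_middle_informative (z = j \/ tc C z j) then true else false.
have UP z : U z <-> (z = j \/ tc C z j).
  by rewrite /U; case: excluded_middle_informative => h; split.
have HU : forall x y, ~~ U x -> U y -> (x < y)%N -> commute_mx (gate_at C x) (gate_at C y).
  move=> x y Ux Uy xy; case E: (commuteb (gate_at C x) (gate_at C y)); first exact/eqP.
  have D : dep C x y by split; rewrite // E.
  exfalso; move/negP: Ux; apply; apply/(UP x); right.
  case/(UP y): Uy => [<-|Tyj]; first exact: tc1.
  exact: tc2 (tc1 D) Tyj.
exists (filter U (iota 0 (size C)) ++ filter (predC U) (iota 0 (size C))); split.
  have := @partition_moves n C U HU (iota 0 (size C)) [::] [::] (iota_ltn_sorted 0 (size C)) isT.
  by apply.
rewrite ij !index_cat.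
have Uj : U j by apply: (UP j).2; left.
have jin : j \in filter U (iota 0 (size C)).
  by rewrite mem_filter mem_iota Uj /= add0n.
have -> : i \in filter U (iota 0 (size C)) = false.
  rewrite mem_filter; case: (boolP (U i)) => // /(UP i) [E|//].
  by rewrite E ltnn in ij.
rewrite jin; have := jin; rewrite -index_mem; lia.
Qed.

Definition edges_dep n (C : seq (gate_mx n)) (E : seq (nat * nat)) :=
  forall u v, (u, v) \in E -> dep C u v.

Lemma inner_dep n (C : seq (gate_mx n)) t k reach E : (k <= t)%N ->
  edges_dep C E -> edges_dep C (canon_inner C t k reach E).
Proof.
elim: k reach E => [|k IH] reach E kt HE //=.
case: ifP => [/andP[_ nc]|_]; apply: IH; try exact: ltnW.
  move=> u v; rewrite inE => /orP[/eqP [-> ->]|]; last exact: HE.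
  by split.
exact: HE.
Qed.

Lemma build_dep n (C : seq (gate_mx n)) t : edges_dep C (canon_build C t).
Proof.
elim: t => [|t IH] /=; first by move=> u v.
exact: inner_dep.
Qed.

Lemma path_tc n (C : seq (gate_mx n)) E u p : edges_dep C E -> p != [::] ->
  path (edge_rel E) u p -> tc C u (last u p).
Proof.
move=> HE; elim: p u => // v p IH u _ /= /andP[e pp].
case: p IH pp => [|w p] IH pp /=; first exact: tc1 (HE _ _ e).
exact: tc2 (tc1 (HE _ _ e)) (IH v isT pp).
Qed.

Lemma reach_sound E k u v : reach_within E k u v -> has_dpath E u v.
Proof.
elim: k u => // k IH u /= /orP[e|/hasP[[a b] eE /andP[/eqP /= au]]].
  by exists [:: v]; rewrite /= /edge_rel e.
subst a => /IH [p [pn [pp pl]]]; exists (b :: p); split=> //=.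
by rewrite /edge_rel eE pp.
Qed.

Lemma dpath_sub (E E' : seq (nat * nat)) u v : {subset E <= E'} ->
  has_dpath E u v -> has_dpath E' u v.
Proof.
move=> S [p [pn [pp pl]]]; exists p; split=> //; split=> //.
by apply: sub_path pp => a b; rewrite /edge_rel; exact: S.
Qed.

Lemma dpath_edge (E : seq (nat * nat)) u v : (u, v) \in E -> has_dpath E u v.
Proof. by move=> e; exists [:: v]; rewrite /= /edge_rel e. Qed.

Lemma dpath_trans (E : seq (nat * nat)) u v w :
  has_dpath E u v -> has_dpath E v w -> has_dpath E u w.
Proof.
move=> [p [pn [pp pl]]] [p' [pn' [pp' pl']]]; exists (p ++ p'); split.
  by case: p pn {pp pl}.
by rewrite cat_path last_cat pl pp pp'.
Qed.

Lemma inner_sub n (C : seq (gate_mx n)) t k reach E :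
  {subset E <= canon_inner C t k reach E}.
Proof.
elim: k reach E => [|k IH] reach E //=.
case: ifP => _ e eE; apply: IH => //; by rewrite inE eE orbT.
Qed.

Lemma inner_main n (C : seq (gate_mx n)) t k reach E : (k <= t)%N ->
  (forall u, (u < k)%N -> ~~ reach u -> has_dpath E u t) ->
  forall s, (s < k)%N -> ~~ commuteb (gate_at C s) (gate_at C t) ->
  has_dpath (canon_inner C t k reach E) s t.
Proof.
elim: k reach E => // k IH reach E kt Inv s sk nc /=.
have skk : (s < k)%N \/ s = k by lia.
case: ifP => [/andP[rk nck] | H].
  have Inv' : forall u, (u < k)%N -> ~~ (reach u && ~~ is_pred ((k, t) :: E) u k) ->
      has_dpath ((k, t) :: E) u t.
    move=> u uk; rewrite negb_and negbK => /orP[nr|ip].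
      apply: dpath_sub (Inv u (ltnW uk) nr) => e eE; by rewrite inE eE orbT.
    apply: dpath_trans (reach_sound ip) (dpath_edge _); by rewrite inE eqxx.
  case: skk => [sk'|->].
    by apply: IH => //; exact: ltnW.
  apply: (@dpath_sub ((k, t) :: E)); first exact: inner_sub.
  by apply: dpath_edge; rewrite inE eqxx.
case: skk => [sk'|Es].
  apply: IH => //; first exact: ltnW.
  by move=> u uk; apply: Inv; exact: ltnW.
subst s; move: H; rewrite nc andbT => /negbT nr.
apply: (@dpath_sub E); first exact: inner_sub.
exact: Inv (ltnSn k) nr.
Qed.

Lemma build_sub n (C : seq (gate_mx n)) t t' : (t <= t')%N ->
  {subset canon_build C t <= canon_build C t'}.
Proof.
elim: t' => [|t' IH] tt'; first by rewrite leqn0 in tt'; move/eqP: tt' => ->.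
rewrite leq_eqVlt in tt'; case/orP: tt' => [/eqP -> //|tt'].
move=> e /(IH tt') e1 /=; exact: inner_sub.
Qed.

Lemma tc_dpath n (C : seq (gate_mx n)) a b : tc C a b ->
  has_dpath (canonical_form C) a b.
Proof.
elim=> [x y D | x y z _ H1 _ H2]; last exact: dpath_trans H1 H2.
have ym := dep_lt_size D; case: D => xy nc.
apply: (@dpath_sub (canon_build C y.+1)); first exact: build_sub.
rewrite /=; apply: inner_main => //.
by move=> u uy; rewrite uy.
Qed.

Theorem mainTheorem2 (n : nat) (C : seq (gate_mx n)) :
  (forall A, A \in C -> unitary_mx A) ->
  forall i j : nat, (i < j)%N -> (j < size C)%N ->
  comm_zero C i j <-> ~ has_dpath (canonical_form C) i j.
Proof.
move=> _ i j ij jm; split.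
  move=> Z [p [pn [pp pl]]]; apply: (comm_zero_tc ij Z).
  rewrite -pl; apply: path_tc pn pp; exact: build_dep.
move=> N; apply: tc_comm_zero => // T; apply: N; exact: tc_dpath.
Qed.
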